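(* Let $E$ be a real Hilbert space, $C\subseteq E$ nonempty closed convex, $\rho=\sup_{x,y\in C}\lVert x-y\rVert\in[0,+\infty]$, $a\in C$, $0<\theta_1\leqslant\theta_2\leqslant\dots\leqslant\theta_T$, and $\widehat{x}_t^*\in E$ arbitrary predictions. Suppose the learner plays $\widetilde{x}_t=P_C\big(a-\sum_{i=1}^{t-1}\theta_ix_i^*\big)$, $x_t=P_C\big(\widetilde{x}_t-\theta_t\widehat{x}_t^*\big)$. Then for all $z_1,\dots,z_T\in C$, \[\mathrm{Regret}(z_1,\dots,z_T)\leqslant\frac1{2\theta_1}\lVert z_1-a\rVert^2+\sum_{t=2}^T\frac1{\theta_t}\Big\lVert z_t-a+\sum_{i=1}^{t-1}\theta_ix_i^*\Big\rVert\,\lVert z_t-z_{t-1}\rVert+\sum_{t=1}^T\frac1{\theta_t}Q_\rho^\star\big(\theta_t\lVert x_t^*-\widehat{x}_t^*\rVert\big)-\sum_{t=1}^T\frac1{2\theta_t}\lVert x_t-\widetilde{x}_t\rVert^2,\] and also \[\mathrm{Regret}(z_1,\dots,z_T)\leqslant\frac1{2\theta_1}\lVert z_1-a\rVert^2+\sum_{t=2}^T\frac1{\theta_t}\Big\lVert z_t-a+\sum_{i=1}^{t-1}\theta_ix_i^*\Big\rVert\,\lVert z_t-z_{t-1}\rVert+\sum_{t=1}^T\frac1{\theta_t}\Phi_{\theta_t}(x_t^*,\widehat{x}_t^* )-\sum_{t=1}^T\frac1{2\theta_t}\lVert y_t-\widetilde{x}_t\rVert^2,\] where $y_t=P_C\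big(\widetilde{x}_t-\theta_t\widehat{y}_t^*\big)$.
   Context: $P_C$ is the metric projection onto $C$. Protocol: at rounds $t=1,\dots,T$ the learner plays $x_t\in C$, the adversary reveals a proper $\varphi_t\colon E\to(-\infty,+\infty]$ with $C\subseteq\operatorname{dom}\partial\varphi_t$, and $x_t^*\in\partial\varphi_t(x_t)$ (usual subdifferential, $E$ identified with its dual). $\mathrm{Regret}(z_1,\dots,z_T)=\sum_t\varphi_t(x_t)-\sum_t\varphi_t(z_t)$. $Q_\rho^\star(\varkappa)=\frac12\varkappa^2-\frac12(\lvert\varkappa\rvert-\rho)_+^2$ (with $Q_\infty^\star(\varkappa)=\frac12\varkappa^2$), $x_+=\max\{x,0\}$. $\widehat{y}_t^*=\lambda\widehat{x}_t^*+(1-\lambda)x_t^*$, $\lambda=\min\{\lVert x_t^*\rVert/\lVert x_t^*-\widehat{x}_t^*\rVert,1\}$ (any $\lambda$ if $x_t^*=\widehat{x}_t^*$). For $\xi>0$: $\Phi_\xi(x^*,\widehat{x}^* )=Q_\rho^\star\big(\xi\min\{\lVert x^*-\widehat{x}^*\rVert,\lVert x^*\rVert\}\big)+\xi\lVert x^*\rVert\min\{\xi(\lVert x^*-\widehat{x}^*\rVert-\lVert x^*\rVert)_+,\rho\}$. *)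

(* Defs.v *)
From HB Require Import structures.
From mathcomp Require Import all_boot all_order all_algebra.
From mathcomp Require Import all_classical all_reals all_analysis.
Set Implicit Arguments. Unset Strict Implicit. Unset Printing Implicit Defensive.
Import Order.TTheory GRing.Theory Num.Theory.
Import numFieldNormedType.Exports.
Local Open Scope classical_set_scope.
Local Open Scope ring_scope.

Section Defs.
Variables (R : realType) (E : normedModType R).

(* ip is an inner product on E inducing the norm of E:
   symmetric, linear in the first argument, and <x,x> = |x|^2.
   Together with completeness of E this makes E a real Hilbert space. *)
Definition is_inner_product (ip : E -> E -> R) : Prop :=
  [/\ (forall x y, ip x y = ip y x),
      (forall (a : R) x y z, ip (a *: x + y) z = a * ip x z + ip y z) &
      (forall x, ip x x = `|x| ^+ 2)].

(* metric projection onto C (nearest point; unique for C nonempty closed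
   convex in a Hilbert space) *)
Definition proj (C : set E) (x : E) : E :=
  xget 0 [set p | C p /\ forall c, C c -> `|x - p| <= `|x - c|].

Definition diam (C : set E) : \bar R :=
  ereal_sup [set r | exists x y, [/\ C x, C y & r = (`|x - y|)%:E]].

Definition proper_fun (phi : E -> \bar R) : Prop :=
  (forall x, phi x <> -oo%E) /\ (exists x, phi x <> +oo%E).

Definition subdiff (ip : E -> E -> R) (phi : E -> \bar R) (x xs : E) : Prop :=
  (exists r : R, phi x = r%:E) /\
  (forall y, (phi x + (ip xs (y - x))%:E <= phi y)%E).

Definition dom_subdiff (ip : E -> E -> R) (phi : E -> \bar R) : set E :=
  [set x | exists xs, subdiff ip phi x xs].

Definition Qstar (rho : \bar R) (k : R) : R :=
  match rho with
  | EFin r => k ^+ 2 / 2 - (Num.max (`|k| - r) 0) ^+ 2 / 2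
  | _ => k ^+ 2 / 2
  end.

Definition min_rho (rho : \bar R) (a : R) : R :=
  match rho with
  | EFin r => Num.min a r
  | _ => a
  end.

Definition Phi (rho : \bar R) (xi : R) (xs xh : E) : R :=
  Qstar rho (xi * Num.min `|xs - xh| `|xs|)
  + xi * `|xs| * min_rho rho (xi * Num.max (`|xs - xh| - `|xs|) 0).

(* lambda = min{|xs|/|xs - xh|, 1}; arbitrary (here 1) when xs = xh *)
Definition lam (xs xh : E) : R :=
  if xs == xh then 1 else Num.min (`|xs| / `|xs - xh|) 1.

Definition yhat (xs xh : E) : E := lam xs xh *: xh + (1 - lam xs xh) *: xs.

(* learner: xtilde_t = P_C(a - sum_{i<t} theta_i xs_i),
            x_t = P_C(xtilde_t - theta_t xh_t)   (0-based rounds) *)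
Definition xtilde (C : set E) (a : E) (theta : nat -> R) (xs : nat -> E)
  (t : nat) : E := proj C (a - \sum_(0 <= i < t) theta i *: xs i).

Definition xplay (C : set E) (a : E) (theta : nat -> R) (xs xh : nat -> E)
  (t : nat) : E := proj C (xtilde C a theta xs t - theta t *: xh t).

Definition yplay (C : set E) (a : E) (theta : nat -> R) (xs xh : nat -> E)
  (t : nat) : E := proj C (xtilde C a theta xs t - theta t *: yhat (xs t) (xh t)).

End Defs.

(* Main.v *)
Require Import Defs.
From HB Require Import structures.
From mathcomp Require Import all_boot all_order all_algebra.
From mathcomp Require Import all_classical all_reals all_analysis.
Import Order.TTheory GRing.Theory Num.Theory.
Import numFieldNormedType.Exports.
Local Open Scope classical_set_scope.
Local Open Scope ring_scope.
From mathcomp Require Import lra ring.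
Set Implicit Arguments. Unset Strict Implicit. Unset Printing Implicit Defensive.
Local Notation proj := Defs.proj.

Section IP.
Variables (R : realType) (E : normedModType R) (ip : E -> E -> R).
Hypothesis hip : is_inner_product ip.
Lemma ipC x y : ip x y = ip y x.
Proof. by case: hip. Qed.
Lemma ipDl x y z : ip (x + y) z = ip x z + ip y z.
Proof. by case: hip => _ h _; have := h 1 x y z; rewrite scale1r mul1r. Qed.
Lemma ip0l z : ip 0 z = 0.
Proof. have := ipDl 0 0 z; rewrite addr0 => h; lra. Qed.
Lemma ipZl a x z : ip (a *: x) z = a * ip x z.
Proof. by case: hip => _ h _; have := h a x 0 z; rewrite addr0 ip0l addr0. Qed.
Lemma ipNl x z : ip (- x) z = - ip x z.
Proof. by have := ipZl (-1) x z; rewrite scaleN1r mulN1r. Qed.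
Lemma ipDr x y z : ip z (x + y) = ip z x + ip z y.
Proof. by rewrite ipC ipDl !(ipC z). Qed.
Lemma ipNr x z : ip z (- x) = - ip z x.
Proof. by rewrite ipC ipNl ipC. Qed.
Lemma ipZr a x z : ip z (a *: x) = a * ip z x.
Proof. by rewrite ipC ipZl ipC. Qed.
Lemma ipxx x : ip x x = `|x| ^+ 2.
Proof. by case: hip. Qed.
Lemma ipCS x y : ip x y <= `|x| * `|y|.
Proof.
have h := ipxx (x - y).
rewrite !(ipDl, ipDr, ipNl, ipNr) !ipxx (ipC y x) in h.
have h1 : `| `|x| - `|y| | <= `|x - y| by apply: ler_dist_dist.
have h2 : (`|x| - `|y|) ^+ 2 <= `|x - y| ^+ 2.
  rewrite -real_normK ?num_real //. apply: lerXn2r => //; rewrite ?nnegrE //.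
nra.
Qed.
End IP.
Lemma cvx_comb (R : realType) (E : normedModType R) (C : set E) (hC : convex_set C) (x y : E) (s : R) :
  0 <= s -> s <= 1 -> C x -> C y -> C (s *: x + (1 - s) *: y).
Proof.
move=> h0 h1 Cx Cy.
have sp : Itv.spec (@Itv.num_sem R) (Itv.Real `[0%Z, 1%Z]) s.
  by rewrite /Itv.num_sem /= num_real in_itv /= h0 h1.
have := hC x y (Itv.mk sp).
by rewrite !inE => /(_ Cx Cy).
Qed.

Section Proj.
Variables (R : realType) (E : completeNormedModType R) (ip : E -> E -> R).
Hypothesis hip : is_inner_product ip.
Variable C : set E.
Hypotheses (hC0 : C !=set0) (hCcl : closed C) (hCcv : convex_set C).

Lemma proj_exists x : exists p, C p /\ forall c, C c -> `|x - p| <= `|x - c|.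
Proof.
set S := [set r | exists2 c, C c & r = `|x - c|].
have S0 : S !=set0 by case: hC0 => c Cc; exists `|x - c|; exists c.
have Slb : has_lbound S by exists 0 => r [c _ ->].
set d := inf S.
have d0 : 0 <= d by apply: lb_le_inf => // r [c _ ->].
have hinf : forall c, C c -> d <= `|x - c|.
  by move=> c Cc; apply: ge_inf => //; exists c.
have hseq : forall n : nat, exists c, C c /\ `|x - c| < d + n.+1%:R^-1.
  move=> n; have : inf S < d + n.+1%:R^-1 by rewrite ltrDl invr_gt0 ltr0Sn.
  by case/(inf_lt S0) => r [c Cc ->] hr; exists c.
have [u hu] := choice hseq.
have key : forall n m, `|u n - u m| ^+ 2 <= (4 * d + 2) * (n.+1%:R^-1 + m.+1%:R^-1).
  move=> n m.
  have [Cn hn] := hu n; have [Cm hm] := hu m.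
  have Cw := cvx_comb hCcv (_ : 0 <= 2^-1) (_ : 2^-1 <= 1) Cn Cm.
  have hw : d <= `|x - (2^-1 *: u n + (1 - 2^-1) *: u m)|.
    by apply: hinf; apply: Cw; rewrite ?invr_ge0 ?invf_le1 ?ler0n ?ler1n.

  set en := n.+1%:R^-1 in hn *; set em := m.+1%:R^-1 in hm *.
  have en0 : 0 < en by rewrite invr_gt0 ltr0Sn.
  have em0 : 0 < em by rewrite invr_gt0 ltr0Sn.
  have en1 : en <= 1 by rewrite invf_le1 ?ltr0Sn // ler1n.
  have em1 : em <= 1 by rewrite invf_le1 ?ltr0Sn // ler1n.
  have ha : `|x - u n| ^+ 2 <= (d + en) ^+ 2 by have := normr_ge0 (x - u n); nra.
  have hb : `|x - u m| ^+ 2 <= (d + em) ^+ 2 by have := normr_ge0 (x - u m); nra.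
  have hw2 : d ^+ 2 <= `|x - (2^-1 *: u n + (1 - 2^-1) *: u m)| ^+ 2 by nra.
  move: ha hb hw2; rewrite -!(ipxx hip).
  rewrite !(ipDl hip, ipDr hip, ipNl hip, ipNr hip, ipZl hip, ipZr hip).
  rewrite (ipC hip (u n) x) (ipC hip (u m) x) (ipC hip (u m) (u n)).
  move=> ha hb hw2.
  have : en ^+ 2 <= en by nra.
  have : em ^+ 2 <= em by nra.
  nra.
set K := 4 * d + 2.
have K0 : 0 < K by rewrite /K; lra.
have cau : cauchy (u @ \oo).
  apply: cauchy_exP => e e0.
  have q0 : 0 < e ^+ 2 / (2 * K) by apply: divr_gt0; [exact: exprn_gt0 | lra].
  have [N _ hN] := near_infty_natSinv_lt (PosNum q0).
  exists (u N); exists N => // n /= hn.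
  rewrite -ball_normE /ball_ /=.
  have k := key N n.
  set a := N.+1%:R^-1 in hN k *; set b := n.+1%:R^-1 in k *.
  have hNn : b <= a by rewrite /a /b lef_pV2 ?posrE ?ltr0Sn // ler_nat ltnS.
  have hNe := hN N (leqnn N); rewrite /= -/a in hNe.
  have b0 : 0 < b by rewrite /b invr_gt0 ltr0Sn.
  set q := e ^+ 2 / (2 * K) in hNe.
  have Kq : 2 * K * q = e ^+ 2 by rewrite /q; field; lra.
  have h1 : 0 <= K * (a - b) by apply: mulr_ge0; lra.
  have h2 : 0 < K * (q - a) by apply: mulr_gt0; lra.
  have hK : K * (a + b) < e ^+ 2 by lra.
  rewrite ltNge; apply/negP => h.
  have hh : e * e <= `|u N - u n| * `|u N - u n| by apply: ler_pM; lra.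
  rewrite -/K in k; rewrite !expr2 in k hK; lra.
have cv : cvg (u @ \oo) by apply: cauchy_cvg.
exists (lim (u @ \oo)); split.
  apply: (closed_cvg C hCcl); last exact: cv.
  - exact: eventually_filter.
  - by exists 0%N => // n _; exact: (hu n).1.
move=> c Cc; apply: le_trans (hinf c Cc).
apply/ler_addgt0Pr => e e0.
have e20 : 0 < e / 2 by exact: divr_gt0.
near \oo => n.
have h1 : `|lim (u @ \oo) - u n| < e / 2.
  by near: n; apply: cvgr_dist_lt.
have h2 : n.+1%:R^-1 < e / 2.
  by near: n; exact: (near_infty_natSinv_lt (PosNum e20)).
have tri := ler_normD (x - u n) (u n - lim (u @ \oo)).
rewrite addrA subrK (distrC (u n)) in tri.
have := (hu n).2.
move=> hx; have h3 : e / 2 + e / 2 = e by rewrite -splitr.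
apply: (le_trans tri); rewrite -h3 addrA; apply: ltW; apply: ltrD => //.
apply: (lt_le_trans hx); rewrite lerD2l; exact: ltW.
Unshelve. all: by end_near.
Qed.
End Proj.
Section Proj2.
Variables (R : realType) (E : completeNormedModType R) (ip : E -> E -> R).
Hypothesis hip : is_inner_product ip.
Variable C : set E.
Hypotheses (hC0 : C !=set0) (hCcl : closed C) (hCcv : convex_set C).

Lemma proj_spec x : C (proj C x) /\ forall c, C c -> `|x - proj C x| <= `|x - c|.
Proof.
rewrite /proj; case: xgetP => [p -> hp | hn] //.
exfalso; have [p hp] := proj_exists hip hC0 hCcl hCcv x; exact: hn p hp.
Qed.

Lemma proj_in x : C (proj C x).
Proof. by case: (proj_spec x). Qed.

Lemma proj_vi x c : C c -> ip (x - proj C x) (c - proj C x) <= 0.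
Proof.
move=> Cc; have [Cp hp] := proj_spec x; set p := proj C x in Cp hp *.
rewrite leNgt; apply/negP => k0.
set k := ip (x - p) (c - p) in k0.
set N := ip (c - p) (c - p).
have N0 : 0 <= N by rewrite /N (ipxx hip) sqr_ge0.
set s := k / (N + k).
have s0 : 0 < s by apply: divr_gt0 => //; lra.
have s1 : s <= 1 by rewrite /s ler_pdivrMr; lra.
have hs : s * (N + k) = k by rewrite /s divfK //; apply/negP => /eqP h; lra.
have Cw := cvx_comb hCcv (ltW s0) s1 Cc Cp.
have hw := hp _ Cw.
have hw2 : `|x - p| ^+ 2 <= `|x - (s *: c + (1 - s) *: p)| ^+ 2.
  by have := normr_ge0 (x - p); nra.
have iden : `|x - (s *: c + (1 - s) *: p)| ^+ 2 = `|x - p| ^+ 2 - 2 * s * k + s ^+ 2 * N.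
  rewrite -!(ipxx hip) /k /N.
  rewrite !(ipDl hip, ipDr hip, ipNl hip, ipNr hip, ipZl hip, ipZr hip).
  rewrite (ipC hip c x) (ipC hip p x) (ipC hip p c).
  ring.
rewrite iden in hw2.
have h1 : 0 < s * k by exact: mulr_gt0.
have h2 : 0 < s * (s * k) by exact: mulr_gt0.
have h3 : s * (s * (N + k)) = s * k by rewrite hs.
nra.
Qed.

Lemma proj_id a : C a -> proj C a = a.
Proof.
move=> Ca; have [_ hp] := proj_spec a.
have := hp a Ca; rewrite subrr normr0 => h.
have : `|a - proj C a| = 0 by apply/eqP; rewrite eq_le h normr_ge0.
by move/eqP; rewrite normr_eq0 subr_eq0 => /eqP <-.
Qed.

Lemma proj_nonexp x y : `|proj C x - proj C y| <= `|x - y|.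
Proof.
have h1 := proj_vi x (proj_in y).
have h2 := proj_vi y (proj_in x).
set p := proj C x in h1 h2 *; set q := proj C y in h1 h2 *.
have h3 := ipCS hip (x - y) (p - q).
have h4 : `|p - q| ^+ 2 <= `|x - y| * `|p - q|.
  move: h1 h2 h3; rewrite -(ipxx hip).
  rewrite !(ipDl hip, ipDr hip, ipNl hip, ipNr hip).
  rewrite ?(ipC hip p x) ?(ipC hip q x) ?(ipC hip p y) ?(ipC hip q y) ?(ipC hip q p) ?(ipC hip y x).
  lra.
have := normr_ge0 (p - q); have := normr_ge0 (x - y).
nra.
Qed.
End Proj2.
Section Core.
Variables (R : realType) (E : completeNormedModType R) (ip : E -> E -> R).
Hypothesis hip : is_inner_product ip.
Variable C : set E.
Hypotheses (hC0 : C !=set0) (hCcl : closed C) (hCcv : convex_set C).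

Definition Gf (u p z : E) : R := (`|z - u| ^+ 2 - `|p - u| ^+ 2) / 2.

Lemma core (u X H z p p' w : E) : C z ->
  p = proj C u -> p' = proj C (u - X) -> w = proj C (p - H) ->
  ip X (w - z) <= `|X - H| * `|w - p'| - `|w - p'| ^+ 2 / 2 - `|w - p| ^+ 2 / 2
     + Gf u p z - Gf (u - X) p' z.
Proof.
move=> Cz hp hp' hw.
have vi1 : ip (u - p) (p' - p) <= 0 by rewrite hp hp'; apply: (proj_vi hip hC0 hCcl hCcv); exact: (proj_in hip hC0 hCcl hCcv).
have vi3 : ip (p - H - w) (p' - w) <= 0 by rewrite hw hp'; apply: (proj_vi hip hC0 hCcl hCcv); exact: (proj_in hip hC0 hCcl hCcv).
have cs := ipCS hip (X - H) (w - p').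
move: vi1 vi3 cs; rewrite /Gf -!(ipxx hip).
rewrite !(ipDl hip, ipDr hip, ipNl hip, ipNr hip).
rewrite ?(ipC hip X u) ?(ipC hip H u) ?(ipC hip p u) ?(ipC hip p' u) ?(ipC hip w u) ?(ipC hip z u).
rewrite ?(ipC hip H X) ?(ipC hip p X) ?(ipC hip p' X) ?(ipC hip w X) ?(ipC hip z X).
rewrite ?(ipC hip p H) ?(ipC hip p' H) ?(ipC hip w H) ?(ipC hip z H).
rewrite ?(ipC hip p' p) ?(ipC hip w p) ?(ipC hip z p).
rewrite ?(ipC hip w p') ?(ipC hip z p') ?(ipC hip z w).
lra.
Qed.
End Core.

Lemma qstar_bound (R : realType) (rho : \bar R) (k d : R) : 0 <= k -> 0 <= d ->
  (forall r, rho = r%:E -> d <= r) -> k * d - d ^+ 2 / 2 <= Qstar rho k.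
Proof.
move=> k0 d0 hd; case: rho hd => [r| |] hd /=.
- have dr := hd r erefl.
  rewrite ger0_norm //.
  case: (boolP (k - r <= 0)) => kr.
  + rewrite max_r //. rewrite expr0n /= mul0r subr0.
    have := sqr_ge0 (k - d); lra.
  + have kr' : 0 < k - r by rewrite ltNge.
    rewrite max_l; last by apply: ltW.
    have h : 0 <= (r - d) * (k - r) by apply: mulr_ge0; lra.
    have := sqr_ge0 (r - d); lra.
- have := sqr_ge0 (k - d); lra.
- have := sqr_ge0 (k - d); lra.
Qed.

Lemma min_rho_bound (R : realType) (rho : \bar R) (v d : R) : d <= v ->
  (forall r, rho = r%:E -> d <= r) -> d <= min_rho rho v.
Proof.
move=> dv hd; case: rho hd => [r| |] hd //=.
by rewrite le_min dv (hd r erefl).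
Qed.

Lemma diam_le (R : realType) (E : normedModType R) (C : set E) c c' :
  C c -> C c' -> forall r, diam C = r%:E -> `|c - c'| <= r.
Proof.
move=> Cc Cc' r hr.
have : ((`|c - c'|)%:E <= diam C)%E by apply: ereal_sup_ubound; exists c, c'.
by rewrite hr lee_fin.
Qed.
Lemma vec_id1 (R : realType) (E : normedModType R) (l : R) (xs xh : E) :
  xs - (l *: xh + (1 - l) *: xs) = l *: (xs - xh).
Proof.
rewrite scalerBr scalerBl scale1r opprD opprB addrCA [xs + _]addrC subrK addrC.
by [].
Qed.
Lemma vec_id2 (R : realType) (E : normedModType R) (l : R) (xs xh : E) :
  (l *: xh + (1 - l) *: xs) - xh = (1 - l) *: (xs - xh).
Proof.
have h := vec_id1 l xs xh.
set y := l *: xh + (1 - l) *: xs in h *.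
have -> : y - xh = (xs - xh) - (xs - y) by rewrite opprB [in RHS]addrC addrA subrK.
by rewrite h scalerBl scale1r.
Qed.
Lemma yhat_norms (R : realType) (E : normedModType R) (xs xh : E) :
  `|xs - yhat xs xh| = Num.min `|xs - xh| `|xs| /\
  `|yhat xs xh - xh| = Num.max (`|xs - xh| - `|xs|) 0.
Proof.
rewrite /yhat vec_id1 vec_id2 !normrZ /lam.
case: eqP => [->|/eqP hne].
- rewrite subrr normr0 !mulr0 sub0r; split; first by rewrite min_l.
  by rewrite max_r // oppr_le0.
- set D := `|xs - xh|.
  have D0 : 0 < D by rewrite normr_gt0 subr_eq0.
  have Dn0 : D != 0 by rewrite gt_eqF.
  case: (boolP (`|xs| <= D)) => h.
  + have q1 : `|xs| / D <= 1 by rewrite ler_pdivrMr // mul1r.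
    have q0 : 0 <= `|xs| / D by apply: divr_ge0 => //; exact: ltW.
    rewrite min_l // (ger0_norm q0) (ger0_norm (_ : 0 <= 1 - `|xs| / D)); last by rewrite subr_ge0.
    rewrite divfK // mulrBl mul1r divfK //; split; first by rewrite min_r.
    by rewrite max_l // subr_ge0.
  + have h' : D < `|xs|.
      by rewrite ltNge.
    have q1 : 1 <= `|xs| / D by rewrite ler_pdivlMr // mul1r ltW.
    rewrite min_r // subrr normr0 mul0r normr1 mul1r; split; first by rewrite min_l // ltW.
    by rewrite max_r // subr_le0 ltW.
Qed.
Lemma vec_id3 (R : realType) (E : normedModType R) (p a b : E) :
  (p - a) - (p - b) = b - a.
Proof. by rewrite opprB addrC addrA subrK. Qed.

Section Step.
Variables (R : realType) (E : completeNormedModType R) (ip : E -> E -> R).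
Hypothesis hip : is_inner_product ip.
Variable C : set E.
Hypotheses (hC0 : C !=set0) (hCcl : closed C) (hCcv : convex_set C).

Lemma step1 (th : R) (u xs xh z : E) : 0 < th -> C z ->
  ip xs (proj C (proj C u - th *: xh) - z) <=
   th^-1 * Qstar (diam C) (th * `|xs - xh|)
   - th^-1 / 2 * `|proj C (proj C u - th *: xh) - proj C u| ^+ 2
   + th^-1 * (Gf u (proj C u) z - Gf (u - th *: xs) (proj C (u - th *: xs)) z).
Proof.
move=> th0 Cz.
set p := proj C u; set p' := proj C (u - th *: xs); set w := proj C (p - th *: xh).
have hc := core hip hC0 hCcl hCcv Cz (erefl : p = proj C u) (erefl : p' = proj C (u - th *: xs)) (erefl : w = proj C (p - th *: xh)).
rewrite (ipZl hip) -scalerBr normrZ gtr0_norm // in hc.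
have hd : forall r, diam C = r%:E -> `|w - p'| <= r.
  by apply: diam_le; exact: (proj_in hip hC0 hCcl hCcv).
have hq := qstar_bound (mulr_ge0 (ltW th0) (normr_ge0 (xs - xh))) (normr_ge0 (w - p')) hd.
have H : th * ip xs (w - z) <= Qstar (diam C) (th * `|xs - xh|) - `|w - p| ^+ 2 / 2
    + (Gf u p z - Gf (u - th *: xs) p' z) by lra.
have ti0 : 0 <= th^-1 by rewrite invr_ge0 ltW.
have := ler_wpM2l ti0 H; rewrite mulKf ?gt_eqF // => H2.
lra.
Qed.

Lemma step2 (th : R) (u xs xh z : E) : 0 < th -> C z ->
  ip xs (proj C (proj C u - th *: xh) - z) <=
   th^-1 * Phi (diam C) th xs xh
   - th^-1 / 2 * `|proj C (proj C u - th *: yhat xs xh) - proj C u| ^+ 2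
   + th^-1 * (Gf u (proj C u) z - Gf (u - th *: xs) (proj C (u - th *: xs)) z).
Proof.
move=> th0 Cz.
set p := proj C u; set p' := proj C (u - th *: xs).
set x := proj C (p - th *: xh); set y := proj C (p - th *: yhat xs xh).
have [n1 n2] := yhat_norms xs xh.
have hc := core hip hC0 hCcl hCcv Cz (erefl : p = proj C u) (erefl : p' = proj C (u - th *: xs)) (erefl : y = proj C (p - th *: yhat xs xh)).
rewrite (ipZl hip) -scalerBr normrZ gtr0_norm // n1 in hc.
have hd : forall r, diam C = r%:E -> `|y - p'| <= r.
  by apply: diam_le; exact: (proj_in hip hC0 hCcl hCcv).
have m0 : 0 <= Num.min `|xs - xh| `|xs| by rewrite le_min !normr_ge0.
have hq := qstar_bound (mulr_ge0 (ltW th0) m0) (normr_ge0 (y - p')) hd.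
have hxy : `|x - y| <= th * Num.max (`|xs - xh| - `|xs|) 0.
  have := proj_nonexp hip hC0 hCcl hCcv (p - th *: xh) (p - th *: yhat xs xh).
  by rewrite -/x -/y vec_id3 -scalerBr normrZ gtr0_norm // n2.
have hxy2 : `|x - y| <= min_rho (diam C) (th * Num.max (`|xs - xh| - `|xs|) 0).
  apply: min_rho_bound => //; apply: diam_le; exact: (proj_in hip hC0 hCcl hCcv).
have cs := ipCS hip xs (x - y).
have cs2 : ip xs (x - y) <= `|xs| * min_rho (diam C) (th * Num.max (`|xs - xh| - `|xs|) 0).
  apply: (le_trans cs); apply: ler_wpM2l => //.
have ti0 : 0 <= th^-1 by rewrite invr_ge0 ltW.
have cs3 := ler_wpM2l (ltW th0) cs2.
have H : th * ip xs (x - z) <= Phi (diam C) th xs xh - `|y - p| ^+ 2 / 2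
    + (Gf u p z - Gf (u - th *: xs) p' z).
  move: cs3 hc; rewrite /Phi !(ipDr hip, ipNr hip); lra.
have := ler_wpM2l ti0 H; rewrite mulKf ?gt_eqF // => H2.
lra.
Qed.
End Step.
Lemma tele (R : realType) (T : nat) (th L B D : nat -> R) (G : nat -> nat -> R) :
  (0 < T)%N -> (forall t, (t < T)%N -> 0 < th t) ->
  (forall t, (t.+1 < T)%N -> th t <= th t.+1) ->
  (forall t, (t < T)%N -> L t <= B t + (th t)^-1 * (G t t - G t.+1 t)) ->
  (forall t, (t < T)%N -> 0 <= G t.+1 t) ->
  (forall t, (t.+1 < T)%N -> G t.+1 t.+1 - G t.+1 t <= D t.+1) ->
  \sum_(0 <= t < T) L t <= (th 0%N)^-1 * G 0%N 0%N + \sum_(1 <= t < T) (th t)^-1 * D t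
     + \sum_(0 <= t < T) B t.
Proof.
move=> T0 thp thm hL hG hD.
have key : forall k, (k < T)%N ->
  \sum_(0 <= t < k.+1) L t <= (th 0%N)^-1 * G 0%N 0%N + \sum_(1 <= t < k.+1) (th t)^-1 * D t
     + \sum_(0 <= t < k.+1) B t - (th k)^-1 * G k.+1 k.
  elim=> [|k IH] hk.
  - rewrite !big_nat1 big_geq // addr0.
    have := hL 0%N hk; lra.
  - have hk' : (k < T)%N by apply: ltnW.
    have IH' := IH hk'.
    rewrite [\sum_(0 <= t < k.+2) L t]big_nat_recr // [\sum_(1 <= t < k.+2) _]big_nat_recr // [\sum_(0 <= t < k.+2) B t]big_nat_recr //=.
    have h1 := hL k.+1 hk.
    have h2 := hD k hk.
    have g0 := hG k hk'.
    have t0 := thp k hk'; have t1 := thp k.+1 hk.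
    have f1 : (th k.+1)^-1 * G k.+1 k <= (th k)^-1 * G k.+1 k.
      apply: ler_wpM2r => //; rewrite lef_pV2 ?posrE //; exact: thm.
    have f2 : (th k.+1)^-1 * (G k.+1 k.+1 - G k.+1 k) <= (th k.+1)^-1 * D k.+1.
      by apply: ler_wpM2l => //; rewrite invr_ge0 ltW.
    lra.
have := key T.-1; rewrite prednK // => /(_ (leqnn T)) h.
have hT : (T.-1 < T)%N by rewrite ltn_predL.
have g0 := hG T.-1 hT; rewrite prednK // in g0.
have t0 := thp _ hT.
have : 0 <= (th T.-1)^-1 * G T T.-1 by apply: mulr_ge0 => //; rewrite invr_ge0 ltW.
lra.
Qed.
Lemma gdiff (R : realType) (E : completeNormedModType R) (ip : E -> E -> R) (hip : is_inner_product ip)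
  (u p z z' : E) : Gf u p z - Gf u p z' <= `|z - u| * `|z - z'|.
Proof.
have cs := ipCS hip (z - u) (z - z').
have sq := sqr_ge0 `|z - z'|.
move: cs sq; rewrite /Gf -!(ipxx hip).
rewrite !(ipDl hip, ipDr hip, ipNl hip, ipNr hip).
rewrite ?(ipC hip u z) ?(ipC hip u z') ?(ipC hip z' z).
lra.
Qed.

Lemma gnonneg (R : realType) (E : completeNormedModType R) (ip : E -> E -> R)
  (hip : is_inner_product ip) (C : set E) (hC0 : C !=set0) (hCcl : closed C)
  (hCcv : convex_set C) (u z : E) : C z -> 0 <= Gf u (proj C u) z.
Proof.
move=> Cz; have [_ hp] := proj_spec hip hC0 hCcl hCcv u.
have := hp z Cz; rewrite (distrC u) (distrC u) => h.
have := normr_ge0 (proj C u - u).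
rewrite /Gf; move=> h0.
have : `|proj C u - u| ^+ 2 <= `|z - u| ^+ 2 by nra.
move=> h2; apply: divr_ge0 => //; lra.
Qed.

Lemma u_rec (R : realType) (E : normedModType R) (a : E) (theta : nat -> R) (xs : nat -> E) t :
  a - \sum_(0 <= i < t.+1) theta i *: xs i = (a - \sum_(0 <= i < t) theta i *: xs i) - theta t *: xs t.
Proof. by rewrite big_nat_recr //= opprD addrA. Qed.

Lemma zu_id (R : realType) (E : normedModType R) (a S z : E) : z - (a - S) = z - a + S.
Proof. by rewrite opprB (addrC S) addrA. Qed.

Lemma th_pos (R : realType) (T : nat) (theta : nat -> R) :
  0 < theta 0%N -> (forall t, (t.+1 < T)%N -> theta t <= theta t.+1) ->
  forall t, (t < T)%N -> 0 < theta t.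
Proof.
move=> h0 hm; elim=> [//|t IH] ht.
have := hm t ht; have := IH (ltnW ht); lra.
Qed.

Unset Implicit Arguments.
Theorem corollary5 (R : realType) (E : completeNormedModType R)
  (ip : E -> E -> R) (hip : is_inner_product ip)
  (C : set E) (hC0 : C !=set0) (hCcl : closed C) (hCcv : convex_set C)
  (a : E) (ha : C a) (T : nat) (hT : (0 < T)%N)
  (theta : nat -> R) (htheta0 : 0 < theta 0%N)
  (htheta : forall t, (t.+1 < T)%N -> theta t <= theta t.+1)
  (phi : nat -> E -> \bar R) (xs xh : nat -> E)
  (hphi : forall t, (t < T)%N -> proper_fun (phi t))
  (hdom : forall t, (t < T)%N -> C `<=` dom_subdiff ip (phi t))
  (hxs : forall t, (t < T)%N ->
     subdiff ip (phi t) (xplay C a theta xs xh t) (xs t))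
  (z : nat -> E) (hz : forall t, (t < T)%N -> C (z t)) :
  let rho := diam C in
  let x := xplay C a theta xs xh in
  let xt := xtilde C a theta xs in
  let y := yplay C a theta xs xh in
  let regret := (\sum_(0 <= t < T) phi t (x t) - \sum_(0 <= t < T) phi t (z t))%E in
  let common := (theta 0%N)^-1 / 2 * `|z 0%N - a| ^+ 2
     + \sum_(1 <= t < T) (theta t)^-1
         * `|z t - a + \sum_(0 <= i < t) theta i *: xs i| * `|z t - z t.-1| in
  (regret <= (common
     + \sum_(0 <= t < T) (theta t)^-1 * Qstar rho (theta t * `|xs t - xh t|)
     - \sum_(0 <= t < T) (theta t)^-1 / 2 * `|x t - xt t| ^+ 2)%:E)%E /\
  (regret <= (common
     + \sum_(0 <= t < T) (theta t)^-1 * Phi rho (theta t) (xs t) (xh t)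
     - \sum_(0 <= t < T) (theta t)^-1 / 2 * `|y t - xt t| ^+ 2)%:E)%E.
Proof.
move=> rho x xt y regret common.
have thp := th_pos htheta0 htheta.
have fxE : forall t, (t < T)%N -> phi t (x t) = (fine (phi t (x t)))%:E.
  by move=> t ht; have [[r hr] _] := hxs t ht; rewrite /x hr.
have fzE : forall t, (t < T)%N -> phi t (z t) = (fine (phi t (z t)))%:E.
  by move=> t ht; have [xs' [[r hr] _]] := hdom t ht (z t) (hz t ht); rewrite hr.
have sub : forall t, (t < T)%N ->
    fine (phi t (x t)) - fine (phi t (z t)) <= ip (xs t) (x t - z t).
  move=> t ht; have [_ h] := hxs t ht; have := h (z t).
  rewrite -/(x t) (fxE t ht) (fzE t ht) -EFinD lee_fin !(ipDr hip, ipNr hip) => h'.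
  lra.
have hreg : regret = (\sum_(0 <= t < T) (fine (phi t (x t)) - fine (phi t (z t))))%:E.
  have e1 : \sum_(0 <= t < T) phi t (x t) = (\sum_(0 <= t < T) fine (phi t (x t)))%:E.
    by rewrite -sumEFin; apply: eq_big_nat => t /andP[_ ht]; exact: fxE.
  have e2 : \sum_(0 <= t < T) phi t (z t) = (\sum_(0 <= t < T) fine (phi t (z t)))%:E.
    by rewrite -sumEFin; apply: eq_big_nat => t /andP[_ ht]; exact: fzE.
  by rewrite /regret e1 e2 -EFinB sumrB.
set u := fun t => a - \sum_(0 <= i < t) theta i *: xs i.
set G := fun t s => Gf (u t) (xt t) (z s).
set D := fun t => `|z t - a + \sum_(0 <= i < t) theta i *: xs i| * `|z t - z t.-1|.
have hG : forall t, (t < T)%N -> 0 <= G t.+1 t.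
  by move=> t ht; apply: (gnonneg hip hC0 hCcl hCcv); exact: hz.
have hD : forall t, (t.+1 < T)%N -> G t.+1 t.+1 - G t.+1 t <= D t.+1.
  by move=> t ht; rewrite /G /D /= -zu_id; apply: (gdiff hip).
have G00 : G 0%N 0%N = `|z 0%N - a| ^+ 2 / 2.
  rewrite /G /Gf /u /xt /xtilde big_geq // subr0 (proj_id hip hC0 hCcl hCcv ha).
  by rewrite subrr normr0 expr0n /= subr0.
have comE : \sum_(1 <= t < T) (theta t)^-1 * D t = \sum_(1 <= t < T) (theta t)^-1
         * `|z t - a + \sum_(0 <= i < t) theta i *: xs i| * `|z t - z t.-1|.
  by apply: eq_bigr => t _; rewrite /D mulrA.
have main : forall B : nat -> R,
    (forall t, (t < T)%N -> ip (xs t) (x t - z t) <= B t + (theta t)^-1 * (G t t - G t.+1 t)) ->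
    \sum_(0 <= t < T) (fine (phi t (x t)) - fine (phi t (z t))) <= common + \sum_(0 <= t < T) B t.
  move=> B hL.
  have h1 := tele hT thp htheta hL hG hD.
  have h2 : \sum_(0 <= t < T) (fine (phi t (x t)) - fine (phi t (z t))) <=
            \sum_(0 <= t < T) ip (xs t) (x t - z t).
    by apply: ler_sum_nat => t /andP[_ ht]; exact: sub.
  rewrite G00 comE in h1; rewrite /common; lra.
rewrite hreg !lee_fin; split.
- rewrite -addrA -sumrB; apply: main => t ht.
  rewrite /G /u u_rec /xt /xtilde u_rec.
  exact: (step1 hip hC0 hCcl hCcv _ _ _ (thp t ht) (hz t ht)).
- rewrite -addrA -sumrB; apply: main => t ht.
  rewrite /G /u u_rec /xt /xtilde u_rec.
  exact: (step2 hip hC0 hCcl hCcv _ _ _ (thp t ht) (hz t ht)).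
Qed.
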